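(* Let $(A,B,\mathfrak H)$ be a P-module and let $\xi,\eta\in\mathfrak H$ be vectors contained in rays $p,q$ respectively. If $p\neq q$ then $\xi$ and $\eta$ are orthogonal. In particular, if $\xi\in\mathfrak H$ is contained in a ray $p$, then $p$ is eventually periodic and the length of a period of $p$ is at most $\dim(\mathfrak H)$.
   Context: A P-module is $(A,B,\mathfrak H)$ with $\mathfrak H$ a finite-dimensional complex Hilbert space and $A,B$ operators with $A^*A+B^*B=\mathrm{id}$. A ray is an infinite binary sequence $p=x_1x_2\cdots$; $p_n=x_1\cdots x_n$. For a finite binary word $w=x_1\cdots x_n$ and $\xi\in\mathfrak H$, $w\xi:=X_{x_n}\cdots X_{x_1}\xi$ where $X_0=A$, $X_1=B$. A non-zero vector $\xi$ is contained in the ray $p$ if $\|p_n\xi\|=\|\xi\|$ for all $n\ge1$. A ray $p$ is eventually periodic if $p=v\cdot w^\infty$ for finite words $v,w$ ($w$ a period). *)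

(* Defs.v *)
(* The scalar field is C := R[i] with R : realType (so C is the
   complex numbers); a finite-dimensional complex Hilbert space of dimension n
   is modelled (up to unitary isomorphism) by column vectors 'cV[C]_n with the
   standard inner product. *)
From HB Require Import structures.
From mathcomp Require Import all_boot all_order all_algebra.
From mathcomp Require Import complex.
From mathcomp Require Import reals.
Set Implicit Arguments. Unset Strict Implicit. Unset Printing Implicit Defensive.
Import Order.TTheory GRing.Theory Num.Theory.
Local Open Scope ring_scope.
Local Open Scope complex_scope.

Section PModules.
Variable R : realType.
Notation C := (R[i]).

Definition adjmx m n (M : 'M[C]_(m, n)) : 'M[C]_(n, m) := (map_mx Num.conj M)^T.

(* standard inner product, conjugate-linear in the first argument *)
Definition hdot n (x y : 'cV[C]_n) : C := (adjmx x *m y) 0 0.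

Definition hnorm n (x : 'cV[C]_n) : C := sqrtC (hdot x x).

Definition is_Pmodule n (A B : 'M[C]_n) : Prop :=
  adjmx A *m A + adjmx B *m B = 1%:M.

(* rays: p : nat -> bool, with x_1 = p 0, x_2 = p 1, ... *)
Definition prefix (p : nat -> bool) (k : nat) : seq bool := mkseq p k.

(* w xi := X_{x_k} ... X_{x_1} xi, X_0 = A, X_1 = B *)
Definition act_word n (A B : 'M[C]_n) (w : seq bool) (xi : 'cV[C]_n) : 'cV[C]_n :=
  foldl (fun v (b : bool) => (if b then B else A) *m v) xi w.

Definition contained n (A B : 'M[C]_n) (xi : 'cV[C]_n) (p : nat -> bool) : Prop :=
  xi != 0 /\ forall k : nat, (1 <= k)%N -> hnorm (act_word A B (prefix p k) xi) = hnorm xi.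

Definition ray_eq_vwinf (p : nat -> bool) (v w : seq bool) : Prop :=
  forall i : nat, p i = if (i < size v)%N then nth false v i
                        else nth false w ((i - size v) %% size w).

End PModules.

(* Main.v *)
Require Import Defs.
From HB Require Import structures.
From mathcomp Require Import all_boot all_order all_algebra.
From mathcomp Require Import complex reals.
From Stdlib Require Import FunctionalExtensionality Classical.
From mathcomp Require Import zify.
Import Order.TTheory GRing.Theory Num.Theory.
Local Open Scope ring_scope.
Local Open Scope complex_scope.

Section Aux.
Set Implicit Arguments.
Variable R : realType.
Variable n : nat.
Variables A B : 'M[R[i]]_n.
Hypothesis PM : is_Pmodule A B.

Lemma hdotE (x y : 'cV[R[i]]_n) : hdot x y = \sum_j (x j 0)^* * y j 0.
Proof. by rewrite /hdot mxE; apply: eq_bigr => j _; rewrite !mxE. Qed.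

Lemma hdot0l (y : 'cV[R[i]]_n) : hdot 0 y = 0.
Proof. by rewrite hdotE big1 // => j _; rewrite mxE conjC0 mul0r. Qed.

Lemma hdot0r (x : 'cV[R[i]]_n) : hdot x 0 = 0.
Proof. by rewrite hdotE big1 // => j _; rewrite mxE mulr0. Qed.

Lemma hdot_ge0 (x : 'cV[R[i]]_n) : 0 <= hdot x x.
Proof. by rewrite hdotE sumr_ge0 // => j _; rewrite -normCKC exprn_ge0. Qed.

Lemma hdot_eq0 (x : 'cV[R[i]]_n) : hdot x x = 0 -> x = 0.
Proof.
rewrite hdotE => H; apply/matrixP => j k; rewrite (ord1 k) mxE.
have H0 : forall i : 'I_n, predT i -> 0 <= (x i 0)^* * x i 0.
  by move=> i _; rewrite -normCKC exprn_ge0.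
have := psumr_eq0P H0 H (i:=j) isT.
by rewrite -normCKC => /eqP; rewrite expf_eq0 /= normr_eq0 => /eqP.
Qed.

Lemma adjmxM m p (M : 'M[R[i]]_(n, m)) (x : 'M[R[i]]_(m, p)) :
  adjmx (M *m x) = adjmx x *m adjmx M.
Proof. by rewrite /adjmx map_mxM trmx_mul. Qed.

Lemma Pid (u v : 'cV[R[i]]_n) : hdot (A *m u) (A *m v) + hdot (B *m u) (B *m v) = hdot u v.
Proof.
have addE (M N : 'M[R[i]]_1) : M 0 0 + N 0 0 = (M + N) 0 0 by rewrite mxE.
rewrite /hdot !adjmxM addE -!mulmxA !(mulmxA (adjmx A)) !(mulmxA (adjmx B)).
by rewrite -mulmxDr -mulmxDl PM mul1mx.
Qed.

Definition X (b : bool) := if b then B else A.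
Definition Y (b : bool) := if b then A else B.
Definition xs (p : nat -> bool) (xi : 'cV[R[i]]_n) k := act_word A B (Defs.prefix p k) xi.

Lemma xsS p xi k : xs p xi k.+1 = X (p k) *m xs p xi k.
Proof. by rewrite /xs /act_word /Defs.prefix mkseqS foldl_rcons. Qed.

Lemma PidXY b (u v : 'cV[R[i]]_n) :
  hdot (X b *m u) (X b *m v) + hdot (Y b *m u) (Y b *m v) = hdot u v.
Proof. by case: b; rewrite /= ?Pid // addrC Pid. Qed.

Lemma cont_dot xi p : contained A B xi p ->
  forall k, hdot (xs p xi k) (xs p xi k) = hdot xi xi.
Proof.
case=> _ H [|k] //; have := H k.+1 isT; rewrite /hnorm => E.
by rewrite -[LHS]sqrtCK -/(xs p xi k.+1) E sqrtCK.
Qed.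

Lemma cont_kill xi p : contained A B xi p ->
  forall k, Y (p k) *m xs p xi k = 0.
Proof.
move=> Hc k; apply: hdot_eq0.
have := PidXY (p k) (xs p xi k) (xs p xi k).
rewrite -xsS !(cont_dot Hc).
by move/(congr1 (fun z => z - hdot xi xi)); rewrite subrr addrC addKr.
Qed.

Lemma orth_k xi eta p q : contained A B xi p -> contained A B eta q ->
  forall k, (forall j, (j < k)%N -> p j = q j) ->
  hdot xi eta = hdot (xs p xi k) (xs q eta k).
Proof.
move=> Hx He; elim=> [|k IH] Hj //.
rewrite IH; last by move=> j Hjk; apply: Hj; apply: ltnW.
rewrite -(PidXY (p k)) !xsS -(Hj k (ltnSn k)).
have K1 := cont_kill Hx k; have K2 := cont_kill He k.
rewrite -(Hj k (ltnSn k)) in K2.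
by rewrite K1 K2 hdot0l addr0.
Qed.

Lemma xs_shift p xi i j :
  xs p xi (i + j) = xs (fun t => p (i + t)) (xs p xi i) j.
Proof. by elim: j => [|j IH]; rewrite ?addn0 // addnS !xsS IH. Qed.

Lemma cont_shift xi p i : contained A B xi p ->
  contained A B (xs p xi i) (fun t => p (i + t)).
Proof.
move=> Hc; split.
  apply/negP => /eqP E; case: (Hc) => /negP H _; apply: H; apply/eqP.
  by apply: hdot_eq0; rewrite -(cont_dot Hc i) E hdot0l.
move=> k _; rewrite /hnorm -/(xs _ _ k) -xs_shift.
by rewrite !(cont_dot Hc).
Qed.

Lemma part1 (xi eta : 'cV[R[i]]_n) (p q : nat -> bool) :
  contained A B xi p -> contained A B eta q -> p <> q -> hdot xi eta = 0.
Proof.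
move=> Hx He Hpq.
have ex : exists k, p k != q k.
  apply: NNPP => H; apply: Hpq; apply: functional_extensionality => k.
  by apply/eqP; apply: negbNE; apply/negP => H2; apply: H; exists k.
case: (ex_minnP ex) => k Hk Hmin.
rewrite (orth_k Hx He k); last first.
  move=> j Hj; apply/eqP; apply: negbNE; apply/negP => H.
  by have := Hmin j H; rewrite leqNgt Hj.
rewrite -Pid.
have K1 := cont_kill Hx k; have K2 := cont_kill He k.
move: Hk K1 K2; case: (p k); case: (q k) => //= _ K1 K2.
  by rewrite K1 K2 hdot0l hdot0r addr0.
by rewrite K1 K2 hdot0l hdot0r addr0.
Qed.

End Aux.

Lemma no_orth (R : realType) n (u : 'I_n.+1 -> 'cV[R[i]]_n) :
  (forall i, u i != 0) -> (forall i j, i != j -> hdot (u i) (u j) = 0) -> False.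
Proof.
move=> Hnz Horth.
pose M := \matrix_(i < n.+1, j < n) u i j 0.
have HK : kermx M != 0.
  rewrite kermx_eq0 /row_free.
  by rewrite ltn_eqF // (leq_ltn_trans (rank_leq_col M)).
have [k Hk] : exists k, row k (kermx M) != 0.
  apply/existsP; apply: contraR HK => /existsPn H.
  by apply/eqP/row_matrixP => k; rewrite row0; apply/eqP/negbNE/H.
pose c := row k (kermx M).
have Hc : c *m M = 0 by rewrite -row_mul mulmx_ker row0.
apply: (negP Hk); apply/eqP/rowP => l; rewrite [RHS]mxE.
have : \sum_j (u l j 0)^* * (c *m M) 0 j = 0.
  by rewrite Hc big1 // => j _; rewrite mxE mulr0.
under eq_bigr => j _ do rewrite mxE mulr_sumr.
rewrite exchange_big /=.
under eq_bigr => i _ do under eq_bigr => j _ do rewrite mulrCA [M _ _]mxE.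
under eq_bigr => i _ do rewrite -mulr_sumr -hdotE.
rewrite (bigD1 l) //= big1 ?addr0; last first.
  by move=> i Hi; rewrite Horth ?mulr0 // eq_sym.
move/eqP; rewrite mulf_eq0 => /orP [/eqP //|/eqP H].
by case/negP: (Hnz l); apply/eqP; apply: hdot_eq0.
Qed.


Lemma period_ok (p : nat -> bool) (i j : nat) : (i < j)%N ->
  (fun t => p (i + t)) = (fun t => p (j + t)) ->
  ray_eq_vwinf p (mkseq p i) (mkseq (fun t => p (i + t)) (j - i)).
Proof.
move=> Hij E idx; rewrite !size_mkseq.
have Ep t : p (i + t)%N = p (j + t)%N by have := congr1 (fun f => f t) E.
set d := (j - i)%N.
have dpos : (0 < d)%N by rewrite /d subn_gt0.
have per : forall m r, p (i + (r + m * d))%N = p (i + r)%N.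
  elim=> [|m IH] r; first by rewrite mul0n addn0.
  have -> : (i + (r + m.+1 * d) = j + (r + m * d))%N by rewrite mulSn /d; lia.
  by rewrite -Ep IH.
case: ltnP => Hi; first by rewrite nth_mkseq.
rewrite nth_mkseq ?ltn_pmod //.
rewrite -{1}(subnKC Hi) {1}(divn_eq (idx - i) d) addnC.
by rewrite addnC [(_ * d + _)%N]addnC per.
Qed.

Theorem lemma2p9 (R : realType) (n : nat) (A B : 'M[R[i]]_n) :
  is_Pmodule A B ->
  (forall (xi eta : 'cV[R[i]]_n) (p q : nat -> bool),
      contained A B xi p -> contained A B eta q -> p <> q -> hdot xi eta = 0) /\
  (forall (xi : 'cV[R[i]]_n) (p : nat -> bool),
      contained A B xi p ->
      exists v w : seq bool,
        (0 < size w)%N /\ (size w <= n)%N /\ ray_eq_vwinf p v w).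
Proof.
move=> PM; split; first exact: part1.
move=> xi p Hc.
have [i [j [Hij [Hjn E]]]] : exists i j : nat, (i < j)%N /\ (j <= n)%N /\
    (fun t => p (i + t)) = (fun t => p (j + t)).
  apply: NNPP => Hno.
  apply: (@no_orth R n (fun k : 'I_n.+1 => xs R A B p xi k)).
    move=> k; by case: (cont_shift k Hc).
  move=> k l Hkl.
  apply: (part1 PM (cont_shift k Hc) (cont_shift l Hc)) => Heq.
  case: (ltngtP k l) => H.
  - by apply: Hno; exists k, l; split; [|split; [rewrite -ltnS|]].
  - by apply: Hno; exists l, k; split; [|split; [rewrite -ltnS|]].
  - by move: Hkl; rewrite (val_inj H) eqxx.
exists (mkseq p i), (mkseq (fun t => p (i + t)) (j - i)).
rewrite size_mkseq; split; first by rewrite subn_gt0.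
split; first by apply: leq_trans (leq_subr _ _) Hjn.
exact: period_ok.
Qed.
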